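(* Let $X$ be a hyperbolic metric on $S$ and let $\alpha,\beta,\gamma\in\hat{\pi}$ be such that the $X$-geodesics $\alpha(X)$ and $\beta(X)$ intersect transversally. Let $P$ be an $(\alpha(X),\beta(X))$-intersection point. Then the equality $\widetilde{(\alpha^m*_P\beta)}_0=\widetilde{\gamma}$ holds for at most two positive integers $m$, and likewise the equality $\widetilde{(\alpha^m*_P\beta)}_\infty=\widetilde{\gamma}$ holds for at most two positive integers $m$.
   Context: $S$ is an oriented surface (possibly with boundary and punctures) of negative Euler characteristic; $\hat{\pi}$ is the set of free homotopy classes of directed closed curves on $S$. For a hyperbolic metric $X$ on $S$ (a point of Teichmüller space) and $\alpha\in\hat{\pi}$, $\alpha(X)$ denotes the geodesic representative of $\alpha$. If $a,b$ are closed curves intersecting transversally, an $(a,b)$-intersection point is a point $P\in a\cap b$ together with a choice of a pair of small arcs, one of $a$ and one of $b$, intersecting only at $P$. For $\alpha^m$ ($m\ge1$) the geodesic $\alpha^m(X)$ is $\alpha(X)$ traversed $m$ times, so $P$ is also regarded as an $(\alpha^m(X),\beta(X))$-intersection point. For directed curves $\alpha,\beta$ meeting transversally at $P$, with $\varepsilon_P(\alpha,\beta)=\pm1$ the sign of the intersection at $P$ and $\alpha_P,\beta_P$ the loops based at $P$, define $(\alpha*_P\beta)_0=|\alpha_P\beta_P^{\varepsilon_P(\alpha,\beta)}|$ and $(\alpha*_P\beta)_\infty=|\alpha_P\beta_P^{-\varepsilon_P(\alpha,\beta)}|$, where $|\cdot|$ denotes free homotopy class. For $x\in\hat{\pi}$,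 $\widetilde{x}$ denotes its free homotopy class with orientation forgotten (so $\widetilde{x}=\widetilde{y}$ iff $y=x$ or $y=x^{-1}$). *)

(* Defs.v *)
From HB Require Import structures.
From Stdlib Require Import Rdefinitions.
From mathcomp Require Import all_boot all_order all_algebra.
From mathcomp Require Import Rstruct.
Set Implicit Arguments. Unset Strict Implicit. Unset Printing Implicit Defensive.
Import Order.TTheory GRing.Theory Num.Theory.
Local Open Scope ring_scope.

Notation M2 := 'M[R]_2.

Definition ma (A : M2) : R := A ord0 ord0.
Definition mb (A : M2) : R := A ord0 ord_max.
Definition mc (A : M2) : R := A ord_max ord0.
Definition md (A : M2) : R := A ord_max ord_max.

(* A discrete, torsion-free (in PSL(2,R)), finitely generated subgroup of
   SL(2,R); its image in PSL(2,R) is the holonomy group of the hyperbolic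
   surface (S, X), i.e. the deck group of the universal cover, ~ pi_1(S). *)
Record fuchsian_group (G : M2 -> Prop) : Prop := {
  fg_det : forall g, G g -> \det g = 1;
  fg_one : G 1;
  fg_mul : forall g h, G g -> G h -> G (g * h);
  fg_inv : forall g, G g -> G g^-1;
  fg_discrete : exists eps : R, 0 < eps /\
    forall g, G g -> (forall i j, `|g i j - (1 : M2) i j| < eps) -> g = 1;
  fg_torsion_free : forall g (n : nat), G g -> (0 < n)%N ->
    (g ^+ n = 1 \/ g ^+ n = -1) -> g = 1 \/ g = -1;
  fg_fin_gen : exists s : seq M2, (forall x, x \in s -> G x) /\
    forall g, G g -> exists w : seq M2,
      (forall x, x \in w -> x \in s \/ x^-1 \in s) /\ g = \prod_(x <- w) x
}.

(* Points of the upper half-plane are pairs (x, y) with y > 0. *)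
(* Moebius action z |-> (a z + b) / (c z + d) for det = 1. *)
Definition mob (A : M2) (z : R * R) : R * R :=
  let: (x, y) := z in
  let D := (mc A * x + md A) ^+ 2 + (mc A * y) ^+ 2 in
  (((ma A * x + mb A) * (mc A * x + md A) + ma A * mc A * y ^+ 2) / D, y / D).

Definition cosh_dist (z w : R * R) : R :=
  1 + ((z.1 - w.1) ^+ 2 + (z.2 - w.2) ^+ 2) / (2 * z.2 * w.2).

Definition hyperbolic (A : M2) : Prop := 2 < `|\tr A|.

(* axis of a hyperbolic A: points displaced by exactly the translation
   length l, where cosh l = tr(A)^2/2 - 1 *)
Definition axis (A : M2) (z : R * R) : Prop :=
  0 < z.2 /\ cosh_dist z (mob A z) = (\tr A) ^+ 2 / 2 - 1.

(* the two axes (geodesics in H^2) meet transversally: they share a point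
   and are distinct geodesics *)
Definition axes_cross (A B : M2) : Prop :=
  (exists z, axis A z /\ axis B z) /\ (exists z, axis A z /\ ~ axis B z).

(* conjugacy in the image of G in PSL(2,R) = free homotopy of directed curves *)
Definition conj_pm (G : M2 -> Prop) (x y : M2) : Prop :=
  exists g, G g /\ (g * x * g^-1 = y \/ g * x * g^-1 = - y).

(* equality of unoriented free homotopy classes: x~ = c~ *)
Definition unor_conj (G : M2 -> Prop) (x c : M2) : Prop :=
  conj_pm G x c \/ conj_pm G x c^-1.

Definition at_most_two_pos (P : nat -> Prop) : Prop :=
  forall m1 m2 m3 : nat, (0 < m1)%N -> (m1 < m2)%N -> (m2 < m3)%N ->
    ~ (P m1 /\ P m2 /\ P m3).

(* Main.v *)
Require Import Defs.
From Stdlib Require Import Rdefinitions.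
From mathcomp Require Import all_boot all_order all_algebra.
From mathcomp Require Import Rstruct ring lra zify.
Import Order.TTheory GRing.Theory Num.Theory.
Local Open Scope ring_scope.

Lemma ord2P (i : 'I_2) : i = ord0 \/ i = ord_max.
Proof. case: i => [[|[|k]] Hk]; [left|right|]; try exact/val_inj. by []. Qed.

Lemma mx2_ext (A B : M2) : ma A = ma B -> mb A = mb B -> mc A = mc B -> md A = md B -> A = B.
Proof.
move=> h1 h2 h3 h4; apply/matrixP => i j.
by case: (ord2P i) => ->; case: (ord2P j) => ->.
Qed.

Lemma sum2 (F : 'I_2 -> R) : \sum_(k < 2) F k = F ord0 + F ord_max.
Proof. rewrite big_ord_recr big_ord1 /=. congr (F _ + F _); exact/val_inj. Qed.

Lemma maM (A B : M2) : ma (A * B) = ma A * ma B + mb A * mc B.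
Proof. by rewrite /ma /mb /mc mxE sum2. Qed.
Lemma mbM (A B : M2) : mb (A * B) = ma A * mb B + mb A * md B.
Proof. by rewrite /ma /mb /md mxE sum2. Qed.
Lemma mcM (A B : M2) : mc (A * B) = mc A * ma B + md A * mc B.
Proof. by rewrite /ma /mc /md mxE sum2. Qed.
Lemma mdM (A B : M2) : md (A * B) = mc A * mb B + md A * md B.
Proof. by rewrite /mb /mc /md mxE sum2. Qed.
Lemma tr2 (A : M2) : \tr A = ma A + md A.
Proof. by rewrite /mxtrace sum2. Qed.
Lemma det2 (A : M2) : \det A = ma A * md A - mb A * mc A.
Proof.
rewrite (expand_det_row A ord0) sum2 /cofactor !det_mx11 !mxE /=.
rewrite /ma /mb /mc /md.
have -> : lift ord0 ord0 = ord_max :> 'I_2 by apply/val_inj.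
have -> : lift ord_max ord0 = ord0 :> 'I_2 by apply/val_inj.
rewrite expr0 expr1 mul1r mulN1r. ring.
Qed.

Lemma ent1 : ma (1 : M2) = 1 /\ mb (1:M2) = 0 /\ mc (1:M2) = 0 /\ md (1:M2) = 1.
Proof. by rewrite /ma /mb /mc /md !mxE. Qed.
Lemma entD (A B : M2) : ma (A + B) = ma A + ma B /\ mb (A + B) = mb A + mb B /\ mc (A + B) = mc A + mc B /\ md (A + B) = md A + md B.
Proof. by rewrite /ma /mb /mc /md !mxE. Qed.
Lemma entN (A : M2) : ma (- A) = - ma A /\ mb (- A) = - mb A /\ mc (- A) = - mc A /\ md (- A) = - md A.
Proof. by rewrite /ma /mb /mc /md !mxE. Qed.
Lemma entZ k (A : M2) : ma (k *: A) = k * ma A /\ mb (k *: A) = k * mb A /\ mc (k *: A) = k * mc A /\ md (k *: A) = k * md A.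
Proof. by rewrite /ma /mb /mc /md !mxE. Qed.

Lemma CH2 (A : M2) : \det A = 1 -> A * A = \tr A *: A - 1.
Proof.
rewrite det2 => h.
have [e1 [e2 [e3 e4]]] := ent1.
have [n1 [n2 [n3 n4]]] := entN (1 : M2).
have [d1 [d2 [d3 d4]]] := entD (\tr A *: A) (-1).
have [z1 [z2 [z3 z4]]] := entZ (\tr A) A.
apply: mx2_ext; rewrite ?maM ?mbM ?mcM ?mdM ?d1 ?d2 ?d3 ?d4 ?z1 ?z2 ?z3 ?z4 ?n1 ?n2 ?n3 ?n4 ?e1 ?e2 ?e3 ?e4 tr2.
- rewrite -h; ring.
- ring.
- ring.
- rewrite -h; ring.
Qed.

Lemma inv2 (A : M2) : \det A = 1 -> A^-1 = \tr A *: 1 - A.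
Proof.
move=> h.
have uA : A \is a GRing.unit by rewrite unitmxE h unitr1.
have E : (\tr A *: 1 - A) * A = 1.
  rewrite mulrBl -scalerAl mul1r.
  by rewrite (CH2 A h) opprB addrC subrK.
by apply: (mulIr uA); rewrite mulVr // E. Qed.

Lemma cosh_distE (z w : R * R) : cosh_dist z w = 1 + ((z.1-w.1)^+2 + (z.2-w.2)^+2) / (2 * z.2 * w.2).
Proof. rewrite /cosh_dist. have -> : IZR 2 = 2 by rewrite /= /IZR /=. reflexivity. Qed.

Definition Rax (A : M2) (z : R * R) :=
  mc A * (z.1 ^+ 2 + z.2 ^+ 2) + (md A - ma A) * z.1 - mb A.

Lemma axis_R (A : M2) (z : R * R) : \det A = 1 -> axis A z -> Rax A z = 0.
Proof.
case: z => x y; rewrite /axis cosh_distE /mob /Rax /= tr2 det2.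
set p := ma A; set q := mb A; set r := mc A; set s := md A.
move=> hd [hy H].
set D := (r * x + s) ^+ 2 + (r * y) ^+ 2.
have Dpos : 0 < D.
  rewrite lt_neqAle /D addr_ge0 ?sqr_ge0 // andbT.
  apply/negP => /eqP /esym /eqP; rewrite paddr_eq0 ?sqr_ge0 // !sqrf_eq0 => /andP[/eqP h1 /eqP h2].
  have r0 : r = 0.
    by move/eqP: h2; rewrite mulf_eq0 (gt_eqF hy) orbF => /eqP.
  have s0 : s = 0 by move: h1; rewrite r0 mul0r add0r.
  by move: hd; rewrite r0 s0 !mulr0 subr0 => /eqP; rewrite eq_sym oner_eq0.
set T := p + s.
set Rr := r * (x ^+ 2 + y ^+ 2) + (s - p) * x - q.
set Xn := (p * x + q) * (r * x + s) + p * r * y ^+ 2.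
have D0 : D != 0 by rewrite gt_eqF.
have y0 : y != 0 by rewrite gt_eqF.
have H2 : (x * D - Xn) ^+ 2 + y ^+ 2 * (D - 1) ^+ 2 = (T ^+ 2 / 2 - 1 - 1) * (2 * y ^+ 2 * D).
  rewrite -H /D /Xn; field.
  by apply/andP; split.
have id : (x * D - Xn) ^+ 2 + y ^+ 2 * (D - (p * s - q * r)) ^+ 2 = D * (Rr ^+ 2 + y ^+ 2 * (T ^+ 2 - 4 * (p * s - q * r))).
  rewrite /D /Xn /Rr /T; ring.
rewrite hd H2 in id.
have : D * Rr ^+ 2 = 0 by move: id; set u := T ^+ 2; set w := y ^+ 2; move=> id; nra.
by move/eqP; rewrite mulf_eq0 (negbTE D0) /= sqrf_eq0 => /eqP.
Qed.

Lemma Qalg (a1 a2 a3 a4 b1 b2 b3 b4 x y : R) :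
  a2 = a3 * (x ^+ 2 + y ^+ 2) + (a4 - a1) * x ->
  b2 = b3 * (x ^+ 2 + y ^+ 2) + (b4 - b1) * x ->
  a1 * a4 - a2 * a3 = 1 -> b1 * b4 - b2 * b3 = 1 -> 4 < (a1 + a4) ^+ 2 ->
  (b1 + b4) ^+ 2 + (a1 * b1 + a2 * b3 + a3 * b2 + a4 * b4) ^+ 2
   - (a1 + a4) * (b1 + b4) * (a1 * b1 + a2 * b3 + a3 * b2 + a4 * b4) < 0.
Proof.
move=> ha hb da db hT.
set L2 := (a1 - a4 - 2 * a3 * x) * (b3 * y) - (a3 * y) * (b1 - b4 - 2 * b3 * x).
have E : 4 * ((b1 + b4) ^+ 2 + (a1 * b1 + a2 * b3 + a3 * b2 + a4 * b4) ^+ 2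
   - (a1 + a4) * (b1 + b4) * (a1 * b1 + a2 * b3 + a3 * b2 + a4 * b4))
   = 4 * (b1 + b4) ^+ 2 - (a1 + a4) ^+ 2 * (b1 + b4) ^+ 2
     + ((a1 + a4) ^+ 2 - 4 * (a1 * a4 - a2 * a3)) * ((b1 + b4) ^+ 2 - 4 * (b1 * b4 - b2 * b3))
     - 4 * L2 ^+ 2.
  rewrite /L2 ha hb; ring.
rewrite da db in E.
have : 0 <= L2 ^+ 2 by apply: sqr_ge0.
move: E hT; set Q := (X in 4 * X = _); set u := (a1 + a4) ^+ 2; set v := (b1 + b4) ^+ 2; set w := L2 ^+ 2.
move=> E hT hw.
have E2 : 4 * Q = 16 - 4 * u - 4 * w by rewrite E /u /v /w; ring.
have HQ : Q < 0 by lra.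
exact: HQ.
Qed.
Lemma mono_up (f : nat -> R) s n :
  (forall i, (s <= i < s + n.+1)%N -> 0 < f i.+1 - f i) -> f s < f (s + n.+1)%N.
Proof.
elim: n => [|n IH] h.
  by have := h s; rewrite addn1; move/(_ (ltac:(lia))) => H; lra.
have h1 := IH (fun i hi => h i (ltac:(lia))).
have h2 := h (s + n.+1)%N (ltac:(lia)).
by rewrite addnS; lra.
Qed.

Lemma seq_two (u : nat -> R) (T : R) : 4 < T ^+ 2 ->
  (forall m, u m.+2 = T * u m.+1 - u m) ->
  u 0%N ^+ 2 + u 1%N ^+ 2 - T * u 0%N * u 1%N < 0 ->
  forall m1 m2 m3, (m1 < m2)%N -> (m2 < m3)%N ->
  ~ (`|u m1| = `|u m2| /\ `|u m2| = `|u m3|).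
Proof.
move=> hT hrec hQ.
set Q0 := u 0%N ^+ 2 + u 1%N ^+ 2 - T * u 0%N * u 1%N in hQ *.
have inv : forall m, u m ^+ 2 + u m.+1 ^+ 2 - T * u m * u m.+1 = Q0.
  elim=> [//|m IH]; rewrite hrec -IH; ring.
have pos : forall m, 0 < T * u m * u m.+1.
  move=> m; have := inv m; have := sqr_ge0 (u m); have := sqr_ge0 (u m.+1); lra.
have absrec : forall m, `|u m.+2| = `|T| * `|u m.+1| - `|u m|.
  move=> m; rewrite -normrM.
  have h1 : 0 < (T * u m.+1) * u m.+2 by exact: pos.
  have h0 : 0 < (T * u m.+1) * u m by rewrite mulrAC; exact: pos.
  have [k0|k0|k0] := ltgtP 0 (T * u m.+1).
  - move: h1; rewrite pmulr_rgt0 // => h1; move: h0; rewrite pmulr_rgt0 // => h0.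
    rewrite !gtr0_norm // hrec; lra.
  - move: h1; rewrite nmulr_rgt0 // => h1; move: h0; rewrite nmulr_rgt0 // => h0.
    rewrite !ltr0_norm // hrec; lra.
  - by move: h1; rewrite -k0 mul0r ltxx.
have pp : forall m, 0 < `|u m|.
  move=> m; rewrite normr_gt0; apply/eqP => h; have := pos m; rewrite h mulr0 mul0r ltxx //.
have hT2 : 2 < `|T|.
  have : `|T| ^+ 2 = T ^+ 2 by rewrite real_normK ?num_real.
  have := normr_ge0 T; nra.
set p := fun m => `|u m|.
have conv : forall i, p i.+1 - p i < p i.+2 - p i.+1.
  move=> i; rewrite /p absrec; have := pp i.+1; nra.
have dinc : forall i k, p i.+1 - p i < p (i + k.+1)%N.+1 - p (i + k.+1)%N.
  move=> i; elim=> [|k IH]; first by rewrite addn1; exact: conv.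
  by rewrite addnS; have := conv (i + k.+1)%N; lra.
move=> m1 m2 m3 h12 h23 [e1 e2].
have [j hj] : exists j, m2 = j.+1 by exists m2.-1; lia.
subst m2.
have [dj|dj] := ltP (p j.+1 - p j) 0.
-
  have := @mono_up (fun i => - p i) m1 (j - m1)%N.
  have -> : (m1 + (j - m1).+1 = j.+1)%N by lia.
  rewrite /p => H.
  have : - `|u m1| < - `|u j.+1|.
    apply: H => i hi.
    have [->|lt] : i = j \/ (i < j)%N by lia.
    - rewrite /p in dj; lra.
    - have := dinc i (j - i.+1)%N.
      have -> : (i + (j - i.+1).+1 = j)%N by lia.
      rewrite /p in dj *; lra.
  lra.
- have := @mono_up p j.+1 (m3 - j.+2)%N.
  have -> : (j.+1 + (m3 - j.+2).+1 = m3)%N by lia.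
  rewrite /p => H.
  have : `|u j.+1| < `|u m3|.
    apply: H => i hi.
    have := dinc j (i - j.+1)%N.
    have -> : (j + (i - j.+1).+1 = i)%N by lia.
    rewrite /p in dj *; lra.
  lra.
Qed.

Lemma Qmat (a b : M2) (z : R * R) : \det a = 1 -> \det b = 1 -> 4 < (\tr a) ^+ 2 ->
  Rax a z = 0 -> Rax b z = 0 ->
  (\tr b) ^+ 2 + (\tr (a * b)) ^+ 2 - \tr a * \tr b * \tr (a * b) < 0.
Proof.
rewrite !det2 /Rax => da db hT ra rb.
have E : (\tr b) ^+ 2 + (\tr (a * b)) ^+ 2 - \tr a * \tr b * \tr (a * b) =
  (ma b + md b) ^+ 2 + (ma a * ma b + mb a * mc b + mc a * mb b + md a * md b) ^+ 2
   - (ma a + md a) * (ma b + md b) * (ma a * ma b + mb a * mc b + mc a * mb b + md a * md b).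
  rewrite !tr2 maM mdM; ring.
rewrite E; apply: (@Qalg _ _ _ _ _ _ _ _ z.1 z.2) => //; [lra | lra | by rewrite -tr2].
Qed.

Lemma tr_conj {G : M2 -> Prop} (HG : fuchsian_group G) (x y : M2) :
  conj_pm G x y -> `|\tr x| = `|\tr y|.
Proof.
case=> g [Gg hg].
have ug : g \is a GRing.unit by rewrite unitmxE (fg_det HG Gg) unitr1.
have E : \tr (g * x * g^-1) = \tr x.
  by rewrite -!mulmxE mxtrace_mulC !mulmxE mulrA mulVr // mul1r.
case: hg => h; first by rewrite -h E.
have -> : y = - (g * x * g^-1) by rewrite h opprK.
by rewrite raddfN /= normrN E.
Qed.

Lemma tr_inv (c : M2) : \det c = 1 -> \tr c^-1 = \tr c.
Proof.
move=> h; rewrite inv2 // raddfB /= mxtraceZ mxtrace1; ring.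
Qed.

Lemma tr_unor {G : M2 -> Prop} (HG : fuchsian_group G) (x c : M2) : G c ->
  unor_conj G x c -> `|\tr x| = `|\tr c|.
Proof.
move=> Gc [h|h]; first exact: tr_conj h.
by rewrite (tr_conj HG _ _ h) tr_inv // (fg_det HG Gc).
Qed.

Lemma tr_rec (a b : M2) m : \det a = 1 ->
  \tr (a ^+ m.+2 * b) = \tr a * \tr (a ^+ m.+1 * b) - \tr (a ^+ m * b).
Proof.
move=> h.
have -> : a ^+ m.+2 * b = (a * a) * (a ^+ m * b) by rewrite !exprS !mulrA.
rewrite (CH2 a h) mulrBl mul1r -scalerAl raddfB /= mxtraceZ.
by rewrite [a ^+ m.+1]exprS mulrA.
Qed.

Lemma main_seq {G : M2 -> Prop} (HG : fuchsian_group G) (a b c : M2) (z : R * R) :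
  G c -> \det a = 1 -> \det b = 1 -> 4 < (\tr a) ^+ 2 -> Rax a z = 0 -> Rax b z = 0 ->
  at_most_two_pos (fun m => unor_conj G (a ^+ m * b) c).
Proof.
move=> Gc da db hT ra rb m1 m2 m3 _ h12 h23 [p1 [p2 p3]].
have := @seq_two (fun m => \tr (a ^+ m * b)) (\tr a) hT.
have hrec : forall m, \tr (a ^+ m.+2 * b) = \tr a * \tr (a ^+ m.+1 * b) - \tr (a ^+ m * b).
  by move=> m; apply: tr_rec.
move=> /(_ hrec).
rewrite /= expr0 expr1 mul1r.
move=> /(_ (Qmat _ _ _ da db hT ra rb) m1 m2 m3 h12 h23); apply.
by rewrite (tr_unor HG _ _ Gc p1) (tr_unor HG _ _ Gc p2) (tr_unor HG _ _ Gc p3).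
Qed.

Theorem lemma3p7 (G : M2 -> Prop) (HG : fuchsian_group G)
  (a b c : M2) (Ga : G a) (Gb : G b) (Gc : G c)
  (ha : hyperbolic a) (hb : hyperbolic b) (hab : axes_cross a b) :
  at_most_two_pos (fun m => unor_conj G (a ^+ m * b) c) /\
  at_most_two_pos (fun m => unor_conj G (a ^+ m * b^-1) c).
Proof.
have da := fg_det HG Ga; have db := fg_det HG Gb.
have hT : 4 < (\tr a) ^+ 2.
  have : `|\tr a| ^+ 2 = (\tr a) ^+ 2 by rewrite real_normK ?num_real.
  move: ha; rewrite /hyperbolic => ha; nra.
case: hab => [[z [za zb]] _].
have ra := axis_R _ _ da za; have rb := axis_R _ _ db zb.
split; first exact: (main_seq HG _ _ _ _ Gc da db hT ra rb).
have dbi : \det b^-1 = 1 by rewrite det_inv db invr1.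
apply: (main_seq HG _ _ _ _ Gc da dbi hT ra).
move: rb; rewrite /Rax (inv2 _ db).
have [e1 [e2 [e3 e4]]] := ent1.
have [d1 [d2 [d3 d4]]] := entD (\tr b *: 1) (- b).
have [z1 [z2 [z3 z4]]] := entZ (\tr b) (1 : M2).
have [n1 [n2 [n3 n4]]] := entN b.
rewrite d1 d2 d3 d4 z1 z2 z3 z4 n1 n2 n3 n4 e1 e2 e3 e4 tr2 => rb.
lra.
Qed.
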